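(* Let $A\in P(n)$ and let $N$ be a unitarily invariant norm on $M_n$. Then $I(N,A)=0$ if and only if $A_{ii}=0$ for some $i\in\{1,\dots,n\}$.
   Context: $M_n$ is the set of complex $n\times n$ matrices, $P(n)$ the positive semidefinite ones, $\circ$ the Hadamard product. For a unitarily invariant norm $N$, $I(N,A)=\min\{N(A\circ B): B\in P(n),\ N(B)=1\}$. *)

(* Defs.v *)
From HB Require Import structures.
From mathcomp Require Import all_boot all_order all_algebra.
From mathcomp Require Import complex.
From mathcomp Require Import boolp classical_sets reals.
Set Implicit Arguments. Unset Strict Implicit. Unset Printing Implicit Defensive.
Import Order.TTheory GRing.Theory Num.Theory.
Local Open Scope ring_scope.

Definition ctmx (R : realType) (m n : nat) (A : 'M[R[i]]_(m, n)) : 'M[R[i]]_(n, m) :=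
  map_mx (@conjc R) A^T.

Definition hadamard (R : realType) (n : nat) (A B : 'M[R[i]]_n) : 'M[R[i]]_n :=
  \matrix_(i, j) (A i j * B i j).

Definition psd (R : realType) (n : nat) (A : 'M[R[i]]_n) : Prop :=
  ctmx A = A /\ forall x : 'cV[R[i]]_n, 0 <= (ctmx x *m A *m x) 0 0.

Definition unitary (R : realType) (n : nat) (U : 'M[R[i]]_n) : Prop :=
  U *m ctmx U = 1%:M.

Definition is_norm (R : realType) (n : nat) (N : 'M[R[i]]_n -> R) : Prop :=
  [/\ forall A, 0 <= N A,
      forall A, N A = 0 -> A = 0,
      forall (c : R[i]) A, N (c *: A) = @complex.Re R `|c| * N A &
      forall A B, N (A + B) <= N A + N B].

Definition unitarily_invariant_norm (R : realType) (n : nat)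
    (N : 'M[R[i]]_n -> R) : Prop :=
  is_norm N /\
  forall U V A, unitary U -> unitary V -> N (U *m A *m V) = N A.

(* I(N,A) = min { N(A o B) : B in P(n), N(B) = 1 }, taken as the infimum
   (the minimum is attained, so this coincides with the paper's min). *)
Definition I_N (R : realType) (n : nat) (N : 'M[R[i]]_n -> R) (A : 'M[R[i]]_n) : R :=
  inf [set N (hadamard A B) | B in [set B | psd B /\ N B = 1]]%classic.

(* Main.v *)
Require Import Defs.
From HB Require Import structures.
From mathcomp Require Import all_boot all_order all_algebra.
From mathcomp Require Import complex.
From mathcomp Require Import boolp classical_sets reals.
From mathcomp Require Import ring lra.
Import Order.TTheory GRing.Theory Num.Theory.
Set Implicit Arguments. Unset Strict Implicit. Unset Printing Implicit Defensive.
Local Open Scope ring_scope.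
Lemma N0 (R : realType) n (N : 'M[R[i]]_n -> R) : is_norm N -> N 0 = 0.
Proof.
case=> _ _ Hs _; rewrite -(scale0r (0 : 'M[R[i]]_n)) Hs normr0 mul0r; done.
Qed.

Lemma Nsum (R : realType) n (N : 'M[R[i]]_n -> R) (I : Type) (r : seq I) (P : pred I) F :
  is_norm N -> N (\sum_(i <- r | P i) F i) <= \sum_(i <- r | P i) N (F i).
Proof.
move=> HN; apply: (big_ind2 (fun x y => N x <= y)).
- by rewrite (N0 HN).
- move=> x1 x2 y1 y2 h1 h2; case: HN => _ _ _ Ht.
  apply: le_trans (Ht _ _) _; exact: lerD.
- by [].
Qed.

Lemma ReNormR (R : realType) (r : R) : complex.Re `|(r%:C)%C| = `|r|.
Proof. by rewrite normc_def /= expr0n /= addr0 sqrtr_sqr. Qed.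

Lemma ReNormi (R : realType) : complex.Re `|('i)%C : R[i]| = 1.
Proof. by rewrite normc_def /= expr0n /= add0r expr1n sqrtr1. Qed.

Lemma NscaleR (R : realType) n (N : 'M[R[i]]_n -> R) (r : R) X :
  is_norm N -> N ((r%:C)%C *: X) = `|r| * N X.
Proof. by case=> _ _ Hs _; rewrite Hs ReNormR. Qed.

Lemma Nscalei (R : realType) n (N : 'M[R[i]]_n -> R) X :
  is_norm N -> N (('i)%C *: X) = N X.
Proof. by case=> _ _ Hs _; rewrite Hs ReNormi mul1r. Qed.
Lemma Nupper (R : realType) n (N : 'M[R[i]]_n -> R) (X : 'M[R[i]]_n) :
  is_norm N -> N X <= \sum_j \sum_k ((`|complex.Re (X j k)| + `|complex.Im (X j k)|) * N (delta_mx j k)).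
Proof.
move=> HN.
have HX : X = \sum_j \sum_k (((complex.Re (X j k))%:C)%C *: delta_mx j k
         + ((complex.Im (X j k))%:C)%C *: (('i)%C *: delta_mx j k)).
  rewrite {1}(matrix_sum_delta X); apply: eq_bigr => j _; apply: eq_bigr => k _.
  rewrite scalerA -scalerDl; congr (_ *: _).
  by rewrite {1}(complexE (X j k)) mulrC.
rewrite {1}HX.
apply: le_trans (@Nsum _ _ _ _ _ _ _ HN) _; apply: ler_sum => j _.
apply: le_trans (@Nsum _ _ _ _ _ _ _ HN) _; apply: ler_sum => k _.
case: (HN) => _ _ _ Ht; apply: le_trans (Ht _ _) _.
by rewrite !NscaleR // Nscalei // mulrDl.
Qed.
Lemma sum_dl (R : realType) n (i : 'I_n) (f : 'I_n -> R[i]) :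
  \sum_m ((m == i)%:R * f m) = f i.
Proof.
by rewrite (bigD1 i) //= eqxx mul1r big1 ?addr0 // => m /negbTE ->; rewrite mul0r.
Qed.

Lemma sum_dr (R : realType) n (i : 'I_n) (f : 'I_n -> R[i]) :
  \sum_m (f m * (m == i)%:R) = f i.
Proof.
by rewrite (bigD1 i) //= eqxx mulr1 big1 ?addr0 // => m /negbTE ->; rewrite mulr0.
Qed.

Lemma PXP (R : realType) n (i : 'I_n) (X : 'M[R[i]]_n) :
  delta_mx i i *m X *m delta_mx i i = X i i *: delta_mx i i.
Proof.
apply/matrixP => a b; rewrite !mxE.
under eq_bigr => l _ do rewrite !mxE.
under eq_bigr => l _ do under eq_bigr => m _ do rewrite !mxE.
have E : forall (p q : bool), ((p && q)%:R : R[i]) = p%:R * q%:R.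
  by case; case; rewrite ?mulr1 ?mulr0.
under eq_bigr => l _ do under eq_bigr => m _ do rewrite E -mulrA.
under eq_bigr => l _ do rewrite -mulr_sumr sum_dl E mulrA.
by rewrite -mulr_suml sum_dr E; case: (a == i); case: (b == i); rewrite ?mulr1 ?mulr0 ?mul1r ?mul0r.
Qed.
Lemma ReN (R : realType) k : complex.Re (k%:R : R[i]) = k%:R.
Proof. elim: k => [|k IH] //; rewrite -addn1 !natrD -IH; by case: (k%:R : R[i]). Qed.

Lemma unitary1 (R : realType) n : unitary (1%:M : 'M[R[i]]_n).
Proof.
rewrite /unitary mul1mx /ctmx; apply/matrixP => a b; rewrite !mxE.
by rewrite conjc_nat eq_sym.
Qed.

Lemma unitaryT (R : realType) n (i : 'I_n) :
  unitary (2%:R *: delta_mx i i - 1%:M : 'M[R[i]]_n).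
Proof.
set T := (2%:R *: delta_mx i i - 1%:M).
have cT : ctmx T = T.
  rewrite /ctmx; apply/matrixP => a b; rewrite !mxE.
  by rewrite rmorphB rmorphM !rmorph_nat (andbC (b == i)) (eq_sym b a).
rewrite /unitary cT /T mulmxBl !mulmxBr !mul1mx mulmx1 -!scalemxAl -!scalemxAr mul_delta_mx.
apply/matrixP => a b; rewrite !mxE; ring.
Qed.
Lemma expand4 (R : realType) n (P T X : 'M[R[i]]_n) :
  (2%:R : R[i]) *: P = T + 1%:M ->
  (4%:R : R[i]) *: (P *m X *m P) = X + T *m X *m 1%:M + 1%:M *m X *m T + T *m X *m T.
Proof.
move=> HP.
have -> : (4%:R : R[i]) = 2%:R * 2%:R by rewrite -natrM.
rewrite -scalerA scalemxAr scalemxAl scalemxAl HP.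
rewrite !mulmx1 !mul1mx mulmxDl !mulmxDr !mul1mx !mulmx1.
by rewrite mulmxDl addrC (addrC (T *m X *m T)) addrA (addrC (T *m X)).
Qed.

Lemma Nlower (R : realType) n (N : 'M[R[i]]_n -> R) (X : 'M[R[i]]_n) (i : 'I_n) :
  unitarily_invariant_norm N ->
  complex.Re `|X i i| * N (delta_mx i i) <= N X.
Proof.
case=> HN Hu.
have Hs : forall (c : R[i]) A, N (c *: A) = complex.Re `|c| * N A by case: HN.
have Ht : forall A B, N (A + B) <= N A + N B by case: HN.
set T := (2%:R *: delta_mx i i - 1%:M : 'M[R[i]]_n).
have hT := unitaryT R i; have h1 := unitary1 R n.
have E : (4%:R : R[i]) *: (delta_mx i i *m X *m delta_mx i i)
   = X + T *m X *m 1%:M + 1%:M *m X *m T + T *m X *m T.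
  apply: expand4; by rewrite /T subrK.
have H4 := f_equal N E.
rewrite Hs normr_nat ReN PXP Hs in H4.
have e1 : N (T *m X *m 1%:M) = N X by apply: Hu.
have e2 : N (1%:M *m X *m T) = N X by apply: Hu.
have e3 : N (T *m X *m T) = N X by apply: Hu.
have : 4%:R * (complex.Re `|X i i| * N (delta_mx i i)) <= 4%:R * N X.
  have -> : 4%:R * N X = N X + N (T *m X *m 1%:M) + N (1%:M *m X *m T) + N (T *m X *m T) :> R.
    rewrite e1 e2 e3; ring.
  rewrite H4; apply: le_trans (Ht _ _) _; rewrite lerD2r.
  apply: le_trans (Ht _ _) _; rewrite lerD2r; exact: Ht.
by rewrite ler_pM2l // ltr0n.
Qed.
Lemma qform (R : realType) n (B : 'M[R[i]]_n) (x : 'cV[R[i]]_n) :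
  (ctmx x *m B *m x) 0 0 = \sum_a \sum_b ((x a 0)^*%C * B a b * x b 0).
Proof.
rewrite !mxE exchange_big /=; apply: eq_bigr => a _.
rewrite mxE mulr_suml; apply: eq_bigr => b _.
by rewrite !mxE.
Qed.

Lemma sum2r (R : realType) n (j k : 'I_n) (c : R[i]) (f : 'I_n -> R[i]) :
  \sum_m (f m * ((m == j)%:R + (m == k)%:R * c)) = f j + f k * c.
Proof.
under eq_bigr => m _ do rewrite mulrDr mulrA.
by rewrite big_split /= sum_dr -mulr_suml sum_dr.
Qed.

Lemma sum2l (R : realType) n (j k : 'I_n) (c : R[i]) (f : 'I_n -> R[i]) :
  \sum_m (((m == j)%:R + (m == k)%:R * c) * f m) = f j + c * f k.
Proof.
under eq_bigr => m _ do rewrite mulrC.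
by rewrite sum2r mulrC.
Qed.

Lemma psdQ (R : realType) n (B : 'M[R[i]]_n) (j k : 'I_n) (c : R[i]) :
  psd B -> 0 <= B j j + B j k * c + c^*%C * (B k j + B k k * c).
Proof.
case=> _ H; move: (H (\col_a ((a == j)%:R + (a == k)%:R * c))).
rewrite qform.
under eq_bigr => a _ do under eq_bigr => b _ do rewrite !mxE -mulrA.
under eq_bigr => a _ do rewrite -mulr_sumr sum2r.
rewrite (eq_bigr (fun a => ((a == j)%:R + (a == k)%:R * c^*%C) * ((B a j + B a k * c)))).
  by rewrite sum2l.
by move=> a _; rewrite rmorphD rmorphM !rmorph_nat.
Qed.
Lemma psd_herm (R : realType) n (B : 'M[R[i]]_n) (j k : 'I_n) :
  psd B -> B k j = (B j k)^*%C.
Proof. by case=> [/matrixP H _]; rewrite -{1}H !mxE. Qed.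

Lemma psd_diag (R : realType) n (B : 'M[R[i]]_n) (j : 'I_n) :
  psd B -> 0 <= B j j.
Proof. by move=> /(psdQ j j 0); rewrite !mulr0 !addr0 conjc0 mul0r addr0. Qed.

Lemma psd_off (R : realType) n (B : 'M[R[i]]_n) (j k : 'I_n) :
  psd B -> `|complex.Re (B j k)| + `|complex.Im (B j k)| <= complex.Re (B j j) + complex.Re (B k k).
Proof.
move=> HB.
have Q1 := psdQ j k (Complex 1 0) HB; have Q2 := psdQ j k (Complex (-1) 0) HB.
have Q3 := psdQ j k (Complex 0 1) HB; have Q4 := psdQ j k (Complex 0 (-1)) HB.
have Dj := psd_diag j HB; have Dk := psd_diag k HB.
rewrite (psd_herm j k HB) in Q1 Q2 Q3 Q4.
move: Q1 Q2 Q3 Q4 Dj Dk.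
case: (B j j) => p q; case: (B k k) => r s; case: (B j k) => a b /=.
simpc.
move=> /andP[_ h1] /andP[_ h2] /andP[_ h3] /andP[_ h4] /andP[_ h5] /andP[_ h6].
case: (lerP 0 a) => ha; [rewrite (ger0_norm ha) | rewrite (ltr0_norm ha)];
case: (lerP 0 b) => hb; [rewrite (ger0_norm hb) | rewrite (ltr0_norm hb) | rewrite (ger0_norm hb) | rewrite (ltr0_norm hb)]; lra.
Qed.
Lemma Ndelta_gt0 (R : realType) n (N : 'M[R[i]]_n -> R) (j k : 'I_n) :
  is_norm N -> 0 < N (delta_mx j k).
Proof.
move=> HN; case: (HN) => H0 Hd _ _; rewrite lt_def H0 andbT.
apply/eqP => /Hd /matrixP /(_ j k); rewrite !mxE !eqxx /=.
by move/eqP; rewrite oner_eq0.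
Qed.

Lemma psd_delta (R : realType) n (i : 'I_n) (r : R) :
  0 <= r -> psd ((r%:C)%C *: (delta_mx i i : 'M[R[i]]_n)).
Proof.
move=> hr; split.
  apply/matrixP => a b; rewrite /ctmx !mxE (andbC (b == i)).
  by case: (_ && _); rewrite ?mulr0 ?mulr1 ?conjc0 ?conjc_real.
move=> x; rewrite qform.
have E : forall (p q : bool), ((p && q)%:R : R[i]) = p%:R * q%:R.
  by case; case; rewrite ?mulr1 ?mulr0.
under eq_bigr => a _ do under eq_bigr => b _ do rewrite !mxE E mulrA [_ * (b == i)%:R]mulrC -!mulrA.
under eq_bigr => a _ do rewrite -mulr_sumr -mulr_sumr sum_dl.
under eq_bigr => a _ do rewrite mulrA mulrA (mulrC _ (a == i)%:R) -!mulrA.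
rewrite sum_dl mulrA (mulrC _ (r%:C)%C) -mulrA.
apply: mulr_ge0; first by rewrite lecR.
by rewrite mulrC mulcJ_ge0.
Qed.
Lemma ge0_real (R : realType) (x : R[i]) : 0 <= x -> x = ((complex.Re x)%:C)%C /\ 0 <= complex.Re x.
Proof. by case: x => a b; rewrite lecE /= => /andP[/eqP -> h]. Qed.

Theorem mainTheorem16 (R : realType) (n : nat) (hn : (0 < n)%N)
    (N : 'M[R[i]]_n -> R) (A : 'M[R[i]]_n) :
  unitarily_invariant_norm N -> psd A ->
  (I_N N A = 0 <-> exists i : 'I_n, A i i = 0).
Proof.
move=> HU HA; case: (HU) => HN _.
have Hnn : forall X, 0 <= N X by case: HN.
have Bex : forall i : 'I_n,
    psd ((((N (delta_mx i i))^-1)%:C)%C *: delta_mx i i) /\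
    N ((((N (delta_mx i i))^-1)%:C)%C *: delta_mx i i) = 1.
  move=> i; have hnu : 0 < N (delta_mx i i) := Ndelta_gt0 i i HN.
  split; first by apply: psd_delta; rewrite invr_ge0 ltW.
  by rewrite NscaleR // ger0_norm ?invr_ge0 ?ltW // mulVf // gt_eqF.
rewrite /I_N.
set S := [set _ | _ in _]%classic.
have lbS : lbound S 0 by move=> y [B _ <-].
have i0 : 'I_n := Ordinal hn.
have neS : (S !=set0)%classic.
  by exists (N (hadamard A ((((N (delta_mx i0 i0))^-1)%:C)%C *: delta_mx i0 i0))); exists (((N (delta_mx i0 i0))^-1)%:C%C *: delta_mx i0 i0) => //; apply: Bex.
split.
- move=> H0; case: (pselect (exists i : 'I_n, A i i = 0)) => // Hno.
  exfalso.
  have Hne : forall i, A i i <> 0 by move=> i Hi; apply: Hno; exists i.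
  pose a i := complex.Re (A i i).
  have Aa : forall i, A i i = ((a i)%:C)%C by move=> i; exact: (ge0_real (psd_diag i HA)).1.
  have ha : forall i, 0 < a i.
    move=> i; rewrite lt_def (ge0_real (psd_diag i HA)).2 andbT.
    by apply/eqP => h; apply: (Hne i); rewrite Aa h.
  pose nu j k := N (delta_mx j k).
  have hnu : forall j k, 0 < nu j k by move=> j k; apply: Ndelta_gt0.
  pose K := \sum_j \sum_k nu j k.
  pose S' := \sum_i (a i * nu i i)^-1.
  have hK : 0 < K.
    rewrite /K (bigD1 i0) //= (bigD1 i0) //=.
    have p1 := hnu i0 i0.
    have p2 : 0 <= \sum_(k | k != i0) nu i0 k by apply: sumr_ge0 => k _; apply: ltW.
    have p3 : 0 <= \sum_(j | j != i0) \sum_k nu j k.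
      by apply: sumr_ge0 => j _; apply: sumr_ge0 => k _; apply: ltW.
    lra.
  have hS : 0 < S'.
    rewrite /S' (bigD1 i0) //=.
    have p1 : 0 < (a i0 * nu i0 i0)^-1 by rewrite invr_gt0 mulr_gt0.
    have p2 : 0 <= \sum_(i | i != i0) (a i * nu i i)^-1.
      by apply: sumr_ge0 => i _; rewrite invr_ge0 ltW // mulr_gt0.
    lra.
  have hL : 0 < 1 / (2 * K * S') by rewrite divr_gt0 // !mulr_gt0.
  have lbL : lbound S (1 / (2 * K * S')).
    move=> y [B [HB HB1] <-].
    set M := N (hadamard A B).
    pose d i := complex.Re (B i i).
    have Bd : forall i, B i i = ((d i)%:C)%C by move=> i; exact: (ge0_real (psd_diag i HB)).1.
    have hd : forall i, 0 <= d i by move=> i; exact: (ge0_real (psd_diag i HB)).2.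
    have h1 : forall i, a i * d i * nu i i <= M.
      move=> i; have := Nlower (hadamard A B) i HU.
      rewrite mxE Aa Bd -rmorphM ReNormR ger0_norm //.
      by rewrite mulr_ge0 // ltW.
    have h2 : forall i, d i <= M * (a i * nu i i)^-1.
      move=> i; have hp : 0 < a i * nu i i by rewrite mulr_gt0.
      rewrite ler_pdivlMr //.
      by rewrite mulrA (mulrC (d i)).
    pose s := \sum_i d i.
    have hs : s <= M * S' by rewrite /S' mulr_sumr; apply: ler_sum => i _; apply: h2.
    have h3 : forall j, d j <= s.
      move=> j; rewrite /s (bigD1 j) //= lerDl; exact: sumr_ge0.
    have h4 : N B <= 2 * s * K.
      rewrite /K mulr_sumr; apply: le_trans (Nupper B HN) _.
      apply: ler_sum => j _; rewrite mulr_sumr; apply: ler_sum => k _.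
      apply: ler_wpM2r; first exact: Hnn.
      apply: le_trans (psd_off j k HB) _.
      have := h3 j; have := h3 k; rewrite -/(d j) -/(d k); lra.
    rewrite ler_pdivrMr ?mulr_gt0 //.
    have hM : 0 <= M := Hnn _.
    rewrite HB1 in h4; nra.
  have := lb_le_inf neS lbL; rewrite H0; lra.
- case=> i Hi.
  have Hz : hadamard A ((((N (delta_mx i i))^-1)%:C)%C *: delta_mx i i) = 0.
    apply/matrixP => a b; rewrite !mxE.
    by case: eqP => [->|_]; case: eqP => [->|_]; rewrite ?Hi ?mul0r ?mulr0 //= ?mulr0.
  have S0 : S 0.
    exists ((((N (delta_mx i i))^-1)%:C)%C *: delta_mx i i); first by apply: Bex.
    by rewrite Hz (N0 HN).
  apply/eqP; rewrite eq_le; apply/andP; split.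
    by apply: (ge_inf _ S0); exists 0.
  exact: lb_le_inf.
Qed.
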